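(* Let $\breve f\colon\{0,\dots,n\}\to\mathbb{Q}$ and $\breve g\colon\{0,\dots,m\}\to\mathbb{Q}$ be convex and $\breve h$ their min-plus convolution. For every $\delta\ge 0$, the sets $P^-_\delta$ and $P^+_\delta$ are monotone paths.
   Context: Convex means $F(i)-F(i-1)\le F(i+1)-F(i)$ for all interior $i$. $\breve h(k)=\min_{i+j=k}\breve f(i)+\breve g(j)$ for $k\in\{0,\dots,n+m\}$. A point is a pair $(i,j)\in\{0,\dots,n\}\times\{0,\dots,m\}$; it lies on diagonal $i+j$. It is $\delta$-relevant if $\breve f(i)+\breve g(j)\le\breve h(i+j)+\delta$. $P^+_\delta$ is the set of points $(i,k-i)$, $k\in\{0,\dots,n+m\}$, where $i$ is maximal such that $(i,k-i)$ is a $\delta$-relevant point; $P^-_\delta$ is defined likewise with $i$ minimal. A set of points $P$ is a monotone path if for every $k\in\{0,\dots,n+m\}$ it contains exactly one point $(i_k,j_k)$ on diagonal $k$, and $(i_{k+1},j_{k+1})\in\{(i_k+1,j_k),(i_k,j_k+1)\}$ for all $k\in\{0,\dots,n+m-1\}$. *)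

(* Defs.v *)
From mathcomp Require Import all_boot all_order all_algebra.
Set Implicit Arguments. Unset Strict Implicit. Unset Printing Implicit Defensive.
Import Order.TTheory GRing.Theory Num.Theory.
Local Open Scope ring_scope.

(* Functions on {0,...,n} are represented as f : nat -> rat; only values
   at 0..n matter. *)

Definition convex_on (n : nat) (F : nat -> rat) : Prop :=
  forall i : nat, (0 < i)%N -> (i < n)%N ->
    F i - F i.-1 <= F i.+1 - F i.

Definition is_point (n m : nat) (p : nat * nat) : bool :=
  (p.1 <= n)%N && (p.2 <= m)%N.

(* Min-plus convolution: h(k) = min_{i+j=k, i<=n, j<=m} f(i)+g(j),
   for k in {0,...,n+m}.  The seed (f (k-m) + g (k-(k-m))) is itself a
   valid term of the minimum when k <= n+m. *)
Definition minconv (n m : nat) (f g : nat -> rat) (k : nat) : rat :=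
  \big[Order.min/(f (k - m)%N + g (k - (k - m))%N)]_(i < n.+1 | (i <= k)%N && (k - i <= m)%N)
     (f i + g (k - i)%N).

Definition relevant (n m : nat) (f g : nat -> rat) (delta : rat) (p : nat * nat) : bool :=
  is_point n m p && (f p.1 + g p.2 <= minconv n m f g (p.1 + p.2) + delta).

Definition Pplus (n m : nat) (f g : nat -> rat) (delta : rat) (p : nat * nat) : Prop :=
  relevant n m f g delta p /\
  forall q : nat * nat, (q.1 + q.2 = p.1 + p.2)%N -> relevant n m f g delta q -> (q.1 <= p.1)%N.

Definition Pminus (n m : nat) (f g : nat -> rat) (delta : rat) (p : nat * nat) : Prop :=
  relevant n m f g delta p /\
  forall q : nat * nat, (q.1 + q.2 = p.1 + p.2)%N -> relevant n m f g delta q -> (p.1 <= q.1)%N.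

Definition monotone_path (n m : nat) (P : nat * nat -> Prop) : Prop :=
  (forall p, P p -> is_point n m p) /\
  (forall k : nat, (k <= n + m)%N ->
     exists p, (P p /\ (p.1 + p.2 = k)%N) /\
       forall q, P q -> (q.1 + q.2 = k)%N -> q = p) /\
  (forall p q, P p -> P q -> (q.1 + q.2 = (p.1 + p.2).+1)%N ->
     q = (p.1.+1, p.2) \/ q = (p.1, p.2.+1)).

(* Main.v *)
Require Import Defs.
From mathcomp Require Import all_boot all_order all_algebra.
From mathcomp Require Import zify ring lra.
Import Order.TTheory GRing.Theory Num.Theory.
Local Open Scope ring_scope.

Lemma Dmono (F : nat -> rat) N : convex_on N F ->
  forall a b, (a <= b)%N -> (b < N)%N -> F a.+1 - F a <= F b.+1 - F b.
Proof.
move=> hF a b; elim: b => [|b IH] hab hbN.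
  by have -> : a = 0%N by lia.
rewrite leq_eqVlt in hab; case/orP: hab => [/eqP->//|hab].
apply: le_trans (IH _ _) _; [lia|lia|].
exact: (hF b.+1 isT hbN).
Qed.

Section S.
Variables (n m : nat) (f g : nat -> rat) (delta : rat).
Hypotheses (hf : convex_on n f) (hg : convex_on m g) (hdelta : 0 <= delta).
Local Notation H := (minconv n m f g).
Local Notation rel := (relevant n m f g delta).

Lemma H_le a b : (a <= n)%N -> (b <= m)%N -> H (a + b) <= f a + g b.
Proof.
move=> ha hb.
have ha' : (a < n.+1)%N by rewrite ltnS.
rewrite /minconv (bigD1 (Ordinal ha')) /=; last by apply/andP; split; lia.
by rewrite addKn ge_min lexx.
Qed.

Lemma H_ex k : (k <= n + m)%N -> exists a, [/\ (a <= k)%N, (a <= n)%N, (k - a <= m)%N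
   & f a + g (k - a) = H k].
Proof.
move=> hk; rewrite /minconv.
apply: (big_ind (fun x => exists a, [/\ (a <= k)%N, (a <= n)%N, (k - a <= m)%N
   & f a + g (k - a) = x])).
- exists (k - m)%N; split => //; lia.
- move=> x y hx hy; rewrite /Order.min; case: ifP => _ //.
- move=> i /andP[h1 h2]; exists (nat_of_ord i); split => //.
  by have := ltn_ord i; lia.
Qed.

Lemma relP a b : rel (a, b) <-> [/\ (a <= n)%N, (b <= m)%N & f a + g b <= H (a + b) + delta].
Proof.
rewrite /relevant /is_point /=; split.
  by case/andP => /andP[-> ->] ->.
by case=> -> -> ->.
Qed.

Lemma min_rel k : (k <= n + m)%N -> exists a, [/\ (a <= k)%N, rel (a, (k - a)%N)
   & f a + g (k - a) = H k].
Proof.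
move=> hk; have [a [h1 h2 h3 h4]] := H_ex k hk.
exists a; split => //; apply/relP; split => //.
have -> : (a + (k - a))%N = k by lia.
by rewrite h4 lerDl.
Qed.

Lemma lemA k i' j' : (i' + j' = k.+1)%N -> rel (i', j') ->
  exists c, [/\ (c <= k)%N, rel (c, (k - c)%N) & (i' <= c.+1)%N].
Proof.
move=> hs /relP [hi hj hq]; rewrite hs in hq.
have [i0 [h0 r0 e0]] := min_rel k ltac:(lia).
have /relP [hn0 hm0 _] := r0.
case: (leqP i' i0.+1) => h; first by exists i0.
have [c ec] : exists c, i' = c.+1 by exists i'.-1; lia.
subst i'.
exists c; split; [lia| |lia].
have -> : (k - c)%N = j' by lia.
apply/relP; split; [lia|lia|].
have -> : (c + j')%N = k by lia.
have hD := Dmono _ _ hf i0 c ltac:(lia) ltac:(lia).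
have hH := H_le i0.+1 (k - i0)%N ltac:(lia) ltac:(lia).
rewrite (_ : (i0.+1 + (k - i0))%N = k.+1) in hH; last by lia.
lra.
Qed.

Lemma lemB i j : rel (i, j) -> (i + j < n + m)%N ->
  exists c, [/\ (c <= (i + j).+1)%N, rel (c, ((i + j).+1 - c)%N) & (i <= c)%N].
Proof.
move=> /relP [hi hj hp] hk.
have [i1 [h1 r1 e1]] := min_rel (i + j).+1 hk.
have /relP [hn1 hm1 _] := r1.
case: (leqP i i1) => h; first by exists i1.
have hb : ((i + j).+1 - i1 <= m)%N by case/relP: r1.
exists i; split; [lia| |lia].
have -> : ((i + j).+1 - i)%N = j.+1 by lia.
apply/relP; split; [lia|lia|].
have -> : (i + j.+1)%N = (i + j).+1 by lia.
have hD := Dmono _ _ hg j (i + j - i1)%N ltac:(lia) ltac:(lia).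
have hH := H_le i1 (i + j - i1)%N ltac:(lia) ltac:(lia).
rewrite (_ : (i1 + (i + j - i1))%N = (i + j)%N) in hH; last by lia.
rewrite (_ : (i + j - i1).+1 = ((i + j).+1 - i1)%N) in hD; last by lia.
lra.
Qed.

Lemma lemC k i' j' : (i' + j' = k.+1)%N -> rel (i', j') ->
  exists c, [/\ (c <= k)%N, rel (c, (k - c)%N) & (c <= i')%N].
Proof.
move=> hs /relP [hi hj hq]; rewrite hs in hq.
have [i0 [h0 r0 e0]] := min_rel k ltac:(lia).
have /relP [hn0 hm0 _] := r0.
case: (leqP i0 i') => h; first by exists i0.
have [d ed] : exists d, j' = d.+1 by exists j'.-1; lia.
subst j'.
exists i'; split; [lia| |lia].
have -> : (k - i')%N = d by lia.
apply/relP; split; [lia|lia|].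
have -> : (i' + d)%N = k by lia.
have hD := Dmono _ _ hg (k - i0)%N d ltac:(lia) ltac:(lia).
have hH := H_le i0 (k - i0).+1 ltac:(lia) ltac:(lia).
rewrite (_ : (i0 + (k - i0).+1)%N = k.+1) in hH; last by lia.
lra.
Qed.

Lemma lemD i j : rel (i, j) -> (i + j < n + m)%N ->
  exists c, [/\ (c <= (i + j).+1)%N, rel (c, ((i + j).+1 - c)%N) & (c <= i.+1)%N].
Proof.
move=> /relP [hi hj hp] hk.
have [i1 [h1 r1 e1]] := min_rel (i + j).+1 hk.
have /relP [hn1 hm1 _] := r1.
case: (leqP i1 i.+1) => h; first by exists i1.
have hb : (i1 <= n)%N by case/relP: r1.
have [e ee] : exists e, i1 = e.+1 by exists i1.-1; lia.
subst i1.
exists i.+1; split; [lia| |lia].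
have -> : ((i + j).+1 - i.+1)%N = j by lia.
apply/relP; split; [lia|lia|].
have -> : (i.+1 + j)%N = (i + j).+1 by lia.
have hD := Dmono _ _ hf i e ltac:(lia) ltac:(lia).
have hH := H_le e (i + j - e)%N ltac:(lia) ltac:(lia).
rewrite (_ : (e + (i + j - e))%N = (i + j)%N) in hH; last by lia.
rewrite (_ : ((i + j).+1 - e.+1)%N = (i + j - e)%N) in e1; last by lia.
lra.
Qed.

End S.

Theorem mainTheorem12 (n m : nat) (f g : nat -> rat)
  (hf : convex_on n f) (hg : convex_on m g) (delta : rat) (hdelta : 0 <= delta) :
  monotone_path n m (Pminus n m f g delta) /\ monotone_path n m (Pplus n m f g delta).
Proof.
split; split; [by move=> p [/andP[]] | split | by move=> p [/andP[]] | split].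
- move=> k hk.
  have [a0 [ha0 ra0 _]] := min_rel n m f g delta hdelta k hk.
  pose P := fun i => (i <= k)%N && relevant n m f g delta (i, (k - i)%N).
  have exP : exists i, P i by exists a0; rewrite /P ha0 ra0.
  case: (ex_minnP exP) => i /andP[hik ri] mini.
  have Pq : forall q : nat * nat, (q.1 + q.2 = k)%N -> relevant n m f g delta q -> P q.1.
    move=> [a b] /= hab hr; rewrite /P; have -> : (k - a)%N = b by lia.
    by rewrite hr andbT; lia.
  exists (i, (k - i)%N); split; first split; [split => // | |].
  + move=> q /= hq hr; apply: mini; apply: Pq hr; lia.
  + rewrite /=; lia.
  + move=> [a b] [hr hm] /= hab.
    have h1 := hm (i, (k - i)%N) ltac:(simpl; lia) ri.
    have h2 := mini a (Pq (a, b) hab hr).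
    simpl in h1; have -> : a = i by lia.
    by have -> : b = (k - i)%N by lia.
- move=> [i j] [a b] [hp mp] [hq mq] /= hs.
  have [c [hc rc hac]] := lemC n m f g delta hg hdelta _ _ _ hs hq.
  have h1 := mp (c, (i + j - c)%N) ltac:(simpl; lia) rc; simpl in h1.
  have hk : (i + j < n + m)%N by case/andP: hq => /andP[/= ? ?] _; lia.
  have [c' [hc' rc' hac']] := lemD n m f g delta hf hdelta _ _ hp hk.
  have h2 := mq (c', ((i + j).+1 - c')%N) ltac:(simpl; lia) rc'; simpl in h2.
  have [ea|ea] : a = i.+1 \/ a = i by lia.
    by left; rewrite ea; have -> : b = j by lia.
  by right; rewrite ea; have -> : b = j.+1 by lia.
- move=> k hk.
  have [a0 [ha0 ra0 _]] := min_rel n m f g delta hdelta k hk.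
  pose P := fun i => (i <= k)%N && relevant n m f g delta (i, (k - i)%N).
  have exP : exists i, P i by exists a0; rewrite /P ha0 ra0.
  have ubP : forall i, P i -> (i <= k)%N by move=> i /andP[].
  case: (ex_maxnP exP ubP) => i /andP[hik ri] maxi.
  have Pq : forall q : nat * nat, (q.1 + q.2 = k)%N -> relevant n m f g delta q -> P q.1.
    move=> [a b] /= hab hr; rewrite /P; have -> : (k - a)%N = b by lia.
    by rewrite hr andbT; lia.
  exists (i, (k - i)%N); split; first split; [split => // | |].
  + move=> q /= hq hr; apply: maxi; apply: Pq hr; lia.
  + rewrite /=; lia.
  + move=> [a b] [hr hm] /= hab.
    have h1 := hm (i, (k - i)%N) ltac:(simpl; lia) ri.
    have h2 := maxi a (Pq (a, b) hab hr).
    simpl in h1; have -> : a = i by lia.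
    by have -> : b = (k - i)%N by lia.
- move=> [i j] [a b] [hp mp] [hq mq] /= hs.
  have [c [hc rc hac]] := lemA n m f g delta hf hdelta _ _ _ hs hq.
  have h1 := mp (c, (i + j - c)%N) ltac:(simpl; lia) rc; simpl in h1.
  have hk : (i + j < n + m)%N by case/andP: hq => /andP[/= ? ?] _; lia.
  have [c' [hc' rc' hac']] := lemB n m f g delta hg hdelta _ _ hp hk.
  have h2 := mq (c', ((i + j).+1 - c')%N) ltac:(simpl; lia) rc'; simpl in h2.
  have [ea|ea] : a = i.+1 \/ a = i by lia.
    by left; rewrite ea; have -> : b = j by lia.
  by right; rewrite ea; have -> : b = j.+1 by lia.
Qed.
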